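(* Let $m\ge1$, $q=2^m$, $n=3$, and let $L(x)=ax+bx^q+cx^{q^2}$ with $a,b,c\in\mathbb F_{q^3}$ and $L(1)=0$. Then \[|\ker\mathrm{Tr}\cap\ker L^\prime|=\begin{cases}1&\text{if }\mathrm{Tr}(a^{q+1}+a^qb+b^{q+1})\ne0,\\ q^2&\text{if }a+b^{q^2}=a+c^q=0,\\ q&\text{otherwise}.\end{cases}\]
   Context: $\mathrm{Tr}(x)=x+x^q+x^{q^2}$ is the trace map of $\mathbb F_{q^3}$ over $\mathbb F_q$. For a $2$-linear polynomial $L(x)=\sum_j a_jx^{2^j}$ over $\mathbb F_{q^3}$, its adjoint is $L^\prime(x)=\sum_j(a_jx)^{2^{-j}}$, where $y\mapsto y^{2^{-j}}$ is the inverse of $y\mapsto y^{2^j}$ on $\mathbb F_{q^3}$; here $L'(x)=ax+(bx)^{q^2}+(cx)^{q}$. $\ker$ denotes the kernel of an additive map on $\mathbb F_{q^3}$. *)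

(* Defs.v *)
From HB Require Import structures.
From mathcomp Require Import all_boot all_order all_algebra all_field.
Set Implicit Arguments. Unset Strict Implicit. Unset Printing Implicit Defensive.
Import GRing.Theory.
Local Open Scope ring_scope.

(* F plays the role of F_{q^3}, q = 2^m (imposed by #|F| = 2^(3m) in the theorem). *)
Definition Tr (F : finFieldType) (q : nat) (x : F) : F :=
  x + x ^+ q + x ^+ (q ^ 2)%N.

Definition Ladj (F : finFieldType) (q : nat) (a b c x : F) : F :=
  a * x + (b * x) ^+ (q ^ 2)%N + (c * x) ^+ q.

Definition Lpoly (F : finFieldType) (q : nat) (a b c x : F) : F :=
  a * x + b * x ^+ q + c * x ^+ (q ^ 2)%N.

(* Main.v *)
Require Import Defs.
From HB Require Import structures.
From mathcomp Require Import all_boot all_order all_algebra all_field.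
Import GRing.Theory.
Local Open Scope ring_scope.
From mathcomp Require Import ring zify.

Section Helpers.
Variable F : finFieldType.

Lemma card_roots_le (n : nat) (r : {poly F}) (S : {set F}) :
  (0 < n)%N -> (size r <= n)%N -> (forall x, x \in S -> x ^+ n + r.[x] = 0) ->
  (#|S| <= n)%N.
Proof.
move=> n0 sr hS.
have sp : size ('X^n + r) = n.+1.
  by rewrite size_addl size_polyXn.
have p0 : 'X^n + r != 0 by rewrite -size_poly_eq0 sp.
have := max_poly_roots p0 _ (enum_uniq (mem S)).
rewrite sp -cardE; apply.
apply/allP => x; rewrite mem_enum => xS.
by rewrite /root hornerD hornerXn hS.
Qed.

Lemma card_ker_img (f : F -> F) (I : {set F}) :
  (forall x : F, x + x = 0) ->
  (forall x y, f (x + y) = f x + f y) -> (forall x, f x \in I) ->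
  (#|F| <= #|[set x | f x == 0%R]| * #|I|)%N.
Proof.
move=> hxx fD fI.
pose r y := odflt (0:F) [pick z | f z == y].
have fr x : f (r (f x)) = f x.
  rewrite /r; case: pickP => [z /eqP //|/(_ x)]; by rewrite eqxx.
pose h x := (x + r (f x), f x).
have hinj : injective h.
  move=> x y [] e1 e2; move: e1; rewrite e2 => /addIr //.
rewrite -cardsX -cardsT -(card_imset _ hinj).
apply: subset_leq_card; apply/subsetP => _ /imsetP [x _ ->].
by rewrite inE /= inE fD fr hxx eqxx fI.
Qed.

End Helpers.
Section Main.
Variables (F : finFieldType) (m : nat).
Hypotheses (hm : (1 <= m)%N) (hF : #|F| = (2 ^ (3 * m))%N).
Let q := (2 ^ m)%N.

Lemma ch2 : (2%N \in [pchar F])%R.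
Proof. exact: (card_finPcharP hF). Qed.

Lemma two0 : (2 : F) = 0.
Proof. exact: (pcharf0 ch2). Qed.

Lemma addxx (x : F) : x + x = 0.
Proof. by rewrite -mulr2n -mulr_natr two0 mulr0. Qed.

Lemma oppE (x : F) : - x = x.
Proof. by apply/eqP; rewrite -subr_eq0 -opprD addxx oppr0. Qed.

Lemma q_gt1 : (1 < q)%N.
Proof. by rewrite /q -{1}(expn0 2) ltn_exp2l. Qed.

Lemma sD (x y : F) : (x + y) ^+ q = x ^+ q + y ^+ q.
Proof.
apply: exprDn_pchar; rewrite (eq_pnat _ (pcharf_eq ch2)) /q pnatX.
by rewrite pnat_id.
Qed.

Lemma s3 (x : F) : x ^+ q ^+ q ^+ q = x.
Proof.
rewrite -!exprM -[X in _ = X]expf_card hF /q -!expnD; congr (_ ^+ (2 ^ _)).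
by rewrite (mulnC 3) !mulnS muln0 addn0 addnA.
Qed.

Lemma sq2 (x : F) : x ^+ (q ^ 2)%N = x ^+ q ^+ q.
Proof. by rewrite -exprM mulnn. Qed.


Lemma s0 : (0 : F) ^+ q = 0.
Proof. by rewrite expr0n; have := q_gt1; case: (q). Qed.

Lemma sinj0 (x : F) : (x ^+ q == 0) = (x == 0).
Proof. by rewrite expf_eq0; have := q_gt1; case: (q). Qed.

Lemma hTr (x : F) : Tr q x = x + x ^+ q + x ^+ q ^+ q.
Proof. by rewrite /Tr sq2. Qed.

Lemma hFq : #|F| = (q ^ 2 * q)%N.
Proof. by rewrite hF /q -expnM -expnD; congr expn; lia. Qed.

Lemma q2gt0 : (0 < q ^ 2)%N.
Proof. have := q_gt1; nia. Qed.

Lemma q2 : (q.+1 <= q ^ 2)%N.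
Proof. have := q_gt1; nia. Qed.

Lemma main (a b c : F) : Lpoly q a b c 1 = 0 ->
  #|[set x : F | (Tr q x == 0) && (Ladj q a b c x == 0)]| =
    (if Tr q (a ^+ q.+1 + a ^+ q * b + b ^+ q.+1) != 0 then 1%N
     else if (a + b ^+ (q ^ 2)%N == 0) && (a + c ^+ q == 0) then (q ^ 2)%N
     else q).
Proof.
move=> hL.
have hc : a + b = c.
  move: hL; rewrite /Lpoly !expr1n !mulr1 => /eqP; rewrite addr_eq0 oppE.
  by move/eqP.
subst c.
pose A := a + b ^+ q ^+ q.
pose B := b ^+ q ^+ q + (a + b) ^+ q.
have hLad x : Tr q x = 0 -> Ladj q a b (a + b) x = A * x + B * x ^+ q.
  rewrite hTr => /eqP; rewrite addr_eq0 oppE => /eqP hx.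
  rewrite /Ladj sq2 !exprMn -hx /A /B; ring.
have HT : Tr q (a ^+ q.+1 + a ^+ q * b + b ^+ q.+1) =
    B * B ^+ q + A * B ^+ q + A * A ^+ q.
  rewrite hTr /A /B !exprS !sD !exprMn !s3.
  move: (a ^+ q ^+ q) (b ^+ q ^+ q) => a2 b2.
  move: (a ^+ q) (b ^+ q) => a1 b1.
  rewrite -[RHS]subr0 -(mul0r (b*b2 + a2*b2 + b2*b2 + a1*b2 + a*b)) -two0.
  ring.
rewrite HT sq2 -/A.
have -> : a + (a + b) ^+ q = A + B.
  rewrite /A /B -[LHS]addr0 -(addxx (b ^+ q ^+ q)); ring.
set P := B * B ^+ q + A * B ^+ q + A * A ^+ q.
set S := [set x | _].
have S_eq : S = [set x | (Tr q x == 0) && (A * x + B * x ^+ q == 0)].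
  apply/setP=> x; rewrite !inE.
  by have [/hLad->|] := eqVneq (Tr q x) 0.
have TrD (x y : F) : Tr q (x + y) = Tr q x + Tr q y.
  by rewrite !hTr !sD; ring.
have [/andP [/eqP A0 /eqP B0] | nAB] := boolP ((A == 0) && (B == 0)).
  have -> : P = 0 by rewrite /P A0 B0 !mul0r !addr0.
  rewrite eqxx A0 B0 addr0 eqxx /=.
  have -> : S = [set x | Tr q x == 0].
    by apply/setP=> x; rewrite S_eq !inE A0 B0 !mul0r addr0 eqxx andbT.
  apply/eqP; rewrite eqn_leq; apply/andP; split.
    apply: (@card_roots_le _ _ ('X^q + 'X)).
    - exact: q2gt0.
    - apply: leq_trans (size_add _ _) _; rewrite size_polyXn size_polyX.
      have := q2; have := q_gt1; rewrite geq_max; lia.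
    move=> x; rewrite inE hTr sq2 => /eqP h.
    by rewrite hornerD hornerXn hornerX -h; ring.
  have := @card_ker_img F (Tr q) [set t | t ^+ q == t] addxx TrD.
  have hI : (#|[set t : F | t ^+ q == t]| <= q)%N.
    apply: (@card_roots_le _ _ (- 'X)).
    - by have := q_gt1; lia.
    - by rewrite size_opp size_polyX q_gt1.
    by move=> x; rewrite inE => /eqP h; rewrite hornerN hornerX h subrr.
  have hin x : Tr q x \in [set t : F | t ^+ q == t].
    by rewrite inE !hTr !sD s3; apply/eqP; ring.
  move=> /(_ hin); rewrite hFq => h.
  have : (q ^ 2 * q <= #|[set x : F | Tr q x == 0%R]| * q)%N.
    by apply: (leq_trans h); rewrite leq_mul2l hI orbT.
  by rewrite leq_pmul2r //; have := q_gt1; lia.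
have -> : (A == 0) && (A + B == 0) = false.
  apply/negbTE; apply: contra nAB => /andP [/eqP A0]; by rewrite A0 add0r eqxx.
have SP x : x \in S -> P * x = 0.
  rewrite S_eq inE => /andP [/eqP hT /eqP hAB].
  move: hT; rewrite hTr => /eqP; rewrite addr_eq0 oppE => /eqP ET.
  move: hAB => /eqP; rewrite addr_eq0 oppE => /eqP E1.
  have E2 : A ^+ q * x ^+ q = B ^+ q * x ^+ q ^+ q by rewrite -!exprMn E1.
  transitivity (B * (B ^+ q * (x + x ^+ q) - A ^+ q * x ^+ q)
     + (A ^+ q - B ^+ q) * (B * x ^+ q - A * x) + 2 * (A * A ^+ q * x)).
    by rewrite /P; ring.
  rewrite ET -E2 E1 !subrr two0. by rewrite !mulr0 mul0r !addr0.
have S0 : 0 \in S by rewrite S_eq inE hTr !s0 !mulr0 !addr0 !eqxx.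
have [P0 | P0] := eqVneq P 0; last first.
  have -> : S = [set 0].
    apply/setP => x; rewrite in_set1; apply/idP/eqP => [xS | ->//].
    by have /eqP := SP x xS; rewrite mulf_eq0 (negbTE P0) => /eqP.
  by rewrite cards1.
rewrite /=.
have Bn0 : B != 0.
  apply: contra nAB => /eqP B0; move: P0; rewrite /P B0 s0 !mulr0 !add0r.
  by move/eqP; rewrite mulf_eq0 sinj0 orbb => ->; rewrite eqxx.
have Bqn0 : B ^+ q != 0 by rewrite sinj0.
have An0 : A != 0.
  apply: contra nAB => /eqP A0; move: P0; rewrite /P A0 s0 !mul0r !addr0.
  by move/eqP; rewrite mulf_eq0 sinj0 orbb => ->; rewrite eqxx.
have [l El] : {l : F | l = A / B} by exists (A / B).
have E0 : 1 + l + l * l ^+ q = 0.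
  have : B * B ^+ q * (1 + l + l * l ^+ q) = P.
    by rewrite El /P exprMn exprVn; field; rewrite Bn0 Bqn0.
  rewrite P0 => /eqP; rewrite mulf_eq0 mulf_eq0 (negbTE Bn0) (negbTE Bqn0) /=.
  by move/eqP.
have E2 : 1 + l ^+ q ^+ q + l ^+ q ^+ q * l = 0.
  have := congr1 (fun z => z ^+ q ^+ q) E0.
  by rewrite /= !sD !exprMn !expr1n s3 !s0.
pose g y := l ^+ q * l ^+ q ^+ q * y + l ^+ q ^+ q * y ^+ q + y ^+ q ^+ q.
have gq y : g y ^+ q = l * g y.
  transitivity (l * g y + ((1 + l ^+ q ^+ q + l ^+ q ^+ q * l)
     - l ^+ q ^+ q * (1 + l + l * l ^+ q)) * y).
    rewrite /g !sD !exprMn !s3.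
    move: (l ^+ q ^+ q) (y ^+ q ^+ q) => l2 y2.
    move: (l ^+ q) (y ^+ q) => l1 y1.
    ring.
  by rewrite E0 E2 mulr0 subrr mul0r addr0.
have gS y : g y \in S.
  rewrite S_eq inE hTr gq exprMn gq.
  have -> : g y + l * g y + l ^+ q * (l * g y) = (1 + l + l * l ^+ q) * g y.
    by ring.
  rewrite E0 mul0r eqxx /=.
  have -> : B * (l * g y) = A * g y by rewrite El mulrA mulrCA divff // mulr1.
  by rewrite addxx.
apply/eqP; rewrite eqn_leq; apply/andP; split.
  apply: (@card_roots_le _ _ (l *: 'X)).
  - by have := q_gt1; lia.
  - by apply: leq_trans (size_scale_leq _ _) _; rewrite size_polyX q_gt1.
  move=> x; rewrite S_eq inE => /andP [_ /eqP hx].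
  rewrite hornerZ hornerX; apply/(mulfI Bn0).
  by rewrite mulr0 mulrDr El mulrA mulrCA divff // mulr1 addrC hx.
have gD y z : g (y + z) = g y + g z by rewrite /g !sD; ring.
have := @card_ker_img F g S addxx gD gS.
have hK : (#|[set y : F | g y == 0%R]| <= q ^ 2)%N.
  apply: (@card_roots_le _ _ ((l ^+ q * l ^+ q ^+ q) *: 'X + l ^+ q ^+ q *: 'X^q)).
  - exact: q2gt0.
  - apply: leq_trans (size_add _ _) _; rewrite geq_max.
    apply/andP; split; apply: leq_trans (size_scale_leq _ _) _.
      by rewrite size_polyX; have := q2; have := q_gt1; lia.
    by rewrite size_polyXn q2.
  move=> y; rewrite inE => /eqP hy.
  by rewrite hornerD !hornerZ hornerX hornerXn sq2 -hy /g; ring.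
rewrite hFq => h.
have : (q ^ 2 * q <= q ^ 2 * #|S|)%N.
  by apply: (leq_trans h); rewrite leq_mul2r hK orbT.
by rewrite leq_pmul2l // q2gt0.
Qed.

End Main.

Theorem mainTheorem4 (m : nat) (F : finFieldType) (a b c : F) :
  (1 <= m)%N ->
  #|F| = (2 ^ (3 * m))%N ->
  Lpoly (2 ^ m) a b c 1 = 0 ->
  let q := (2 ^ m)%N in
  #|[set x : F | (Tr q x == 0) && (Ladj q a b c x == 0)]| =
    (if Tr q (a ^+ q.+1 + a ^+ q * b + b ^+ q.+1) != 0 then 1%N
     else if (a + b ^+ (q ^ 2)%N == 0) && (a + c ^+ q == 0) then (q ^ 2)%N
     else q).
Proof.
move=> hm hF hL.
exact (@main F m hm hF a b c hL).
Qed.
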